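(* Assume the setting in the context, and suppose in addition that $S$ is locally optimal, i.e. $\sum_{a \in A} w_{(A,B)}(a)^2 \le \sum_{b \in B} w(b)^2$ for every $k$-replacement $(A,B)$ for $S$. Let $O \in \mathcal{I}$ and let $Y_e$, $P_x$, $N_x$ be as in the context. Then for every $x \in S$, \[ w(x) \;\ge\; \sum_{e \in P_x} \Bigl(2\, w_{(P_x,N_x)}(e) - \sum_{z \in Y_e} w(z)\Bigr). \]
   Context: Setting. $\mathcal{G}$ is a finite ground set with $|\mathcal{G}| = n$, and $f : 2^{\mathcal{G}} \to \mathbb{R}_{\ge 0}$ is a nonnegative monotone submodular function. $\mathcal{I} \subseteq 2^{\mathcal{G}}$ is a nonempty downward-closed family that is a $k$-exchange system: for all $A, B \in \mathcal{I}$ there is a collection $\{Y_e \subseteq B \setminus A : e \in A \setminus B\}$ such that (K1) $|Y_e| \le k$ for each $e$; (K2) every $x \in B \setminus A$ lies in at most $k$ of the sets $Y_e$; (K3) for every $C \subseteq A \setminus B$, $(B \setminus \bigcup_{e \in C} Y_e) \cup C \in \mathcal{I}$. This collection is extended by setting $Y_e = \{e\}$ for each $e \in A \cap B$. Weights. Fix $\alpha > 0$ and a total order $\prec$ on $\mathcal{G}$. For $S \in \mathcal{I}$ with elements $s_1 \prec \dots \prec s_m$ and $S_i = \{s_1,\dots,s_i\}$, define $w(s_i) = \lfloor (f(S_{i-1} \cup \{s_i\}) - f(S_{i-1}))/\alpha \rfloor \alpha$. A $k$-replacement for $S$ is a pair $(A,B)$ with $B \subseteq S$, $A \subseteq \mathcal{G}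 \setminus (S \setminus B)$, $|A| \le k$, $|B| \le k^2 - k + 1$, and $(S \setminus B) \cup A \in \mathcal{I}$. For such a pair, write $A = \{a_1 \prec \dots \prec a_r\}$, $A_i = \{a_1,\dots,a_i\}$, and define $w_{(A,B)}(a_i) = \lfloor (f((S\setminus B) \cup A_{i-1} \cup \{a_i\}) - f((S\setminus B)\cup A_{i-1}))/\alpha \rfloor \alpha$. Sets $P_x, N_x$. Given $S, O \in \mathcal{I}$, take the neighborhoods $\{Y_e\}_{e \in O}$ given by the $k$-exchange property applied with $A = O$, $B = S$ (extended by $Y_e = \{e\}$ for $e \in O \cap S$). For each $e \in O$ with $Y_e \ne \emptyset$, choose $x_e \in Y_e$ of maximum weight $w$ (ties broken arbitrarily). For $x \in S$, let $P_x = \{e \in O : x_e = x\}$ and $N_x = \bigcup_{e \in P_x} Y_e$. *)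

(* Defs.v *)
From HB Require Import structures.
From mathcomp Require Import all_boot all_order all_algebra.
Set Implicit Arguments. Unset Strict Implicit. Unset Printing Implicit Defensive.
Import Order.TTheory GRing.Theory Num.Theory.
Local Open Scope ring_scope.

Section Defs.
Variables (R : archiRealFieldType) (T : finType).

Definition nonneg_fun (f : {set T} -> R) := forall A, 0 <= f A.
Definition monotone_fun (f : {set T} -> R) :=
  forall A B : {set T}, A \subset B -> f A <= f B.
Definition submodular_fun (f : {set T} -> R) :=
  forall A B : {set T}, f (A :|: B) + f (A :&: B) <= f A + f B.

Definition downward_closed (I : pred {set T}) :=
  forall A B : {set T}, B \subset A -> I A -> I B.

Definition kexch_nbhd (I : pred {set T}) (k : nat) (A B : {set T})
    (Y : T -> {set T}) : Prop :=
  [/\ forall e, e \in A :\: B -> Y e \subset B :\: A,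
      forall e, e \in A :\: B -> (#|Y e| <= k)%N,
      forall x, x \in B :\: A -> (#|[set e in A :\: B | x \in Y e]| <= k)%N &
      forall C : {set T}, C \subset A :\: B ->
        I ((B :\: \bigcup_(e in C) Y e) :|: C)].

Definition k_exchange_system (I : pred {set T}) (k : nat) :=
  forall A B, I A -> I B -> exists Y : T -> {set T}, kexch_nbhd I k A B Y.

Definition total_order (prec : rel T) :=
  [/\ reflexive prec, antisymmetric prec, transitive prec & total prec].

Definition floor_mult (alpha x : R) : R := (Num.floor (x / alpha))%:~R * alpha.

Definition marg (f : {set T} -> R) (X : {set T}) (e : T) : R := f (e |: X) - f X.

Definition before (prec : rel T) (X : {set T}) (e : T) : {set T} :=
  [set t in X | prec t e && (t != e)].

Definition wS (f : {set T} -> R) (alpha : R) (prec : rel T) (S : {set T}) (s : T) : R :=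
  floor_mult alpha (marg f (before prec S s) s).

Definition wAB (f : {set T} -> R) (alpha : R) (prec : rel T) (S A B : {set T}) (a : T) : R :=
  floor_mult alpha (marg f ((S :\: B) :|: before prec A a) a).

Definition k_replacement (I : pred {set T}) (k : nat) (S A B : {set T}) :=
  [/\ B \subset S, A \subset ~: (S :\: B), (#|A| <= k)%N,
      (#|B| <= k ^ 2 - k + 1)%N & I ((S :\: B) :|: A)].

Definition locally_optimal (I : pred {set T}) (k : nat) (f : {set T} -> R)
    (alpha : R) (prec : rel T) (S : {set T}) :=
  forall A B : {set T}, k_replacement I k S A B ->
    \sum_(a in A) wAB f alpha prec S A B a ^+ 2 <= \sum_(b in B) wS f alpha prec S b ^+ 2.

Definition Pset (O : {set T}) (Y : T -> {set T}) (xe : T -> T) (x : T) : {set T} :=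
  [set e in O | (Y e != set0) && (xe e == x)].
Definition Nset (O : {set T}) (Y : T -> {set T}) (xe : T -> T) (x : T) : {set T} :=
  \bigcup_(e in Pset O Y xe x) Y e.

End Defs.

(* Main.v *)
Require Import Defs.
From HB Require Import structures.
From mathcomp Require Import all_boot all_order all_algebra.
From mathcomp Require Import zify ring lra.
Import Order.TTheory GRing.Theory Num.Theory.
Local Open Scope ring_scope.

Lemma sum_bigcup_le (R : numDomainType) (T I : finType) (P : {set I})
  (A : I -> {set T}) (g : T -> R) : (forall z, 0 <= g z) ->
  \sum_(z in \bigcup_(e in P) A e) g z <= \sum_(e in P) \sum_(z in A e) g z.
Proof.
move=> g0.
rewrite (exchange_big_dep (fun z => z \in \bigcup_(e in P) A e)) /=; last first.
  by move=> e z eP zA; apply/bigcupP; exists e.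
apply: ler_sum => z /bigcupP [e eP zA].
rewrite (bigD1 e) /=; last by rewrite eP zA.
by rewrite lerDl sumr_ge0.
Qed.

Lemma card_bigcup_le (T I : finType) (P : {set I}) (A : I -> {set T}) :
  (#|\bigcup_(e in P) A e| <= \sum_(e in P) #|A e|)%N.
Proof.
have := @sum_bigcup_le int T I P A (fun _ => 1) (fun _ => ler01).
move=> H.
have E : \sum_(e in P) \sum_(z in A e) (1:int) = (\sum_(e in P) #|A e|)%N%:R.
  by rewrite natr_sum; apply: eq_bigr => e _; rewrite sumr_const.
rewrite E sumr_const in H.
by rewrite -(ler_nat int).
Qed.

Lemma sum_subset_le (R : numDomainType) (T : finType) (A B : {set T}) (g : T -> R) :
  A \subset B -> (forall z, z \in B -> 0 <= g z) ->
  \sum_(z in A) g z <= \sum_(z in B) g z.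
Proof.
move=> AB g0; rewrite [X in _ <= X](big_setID A) /= (setIidPr AB) lerDl.
by apply: sumr_ge0 => z; rewrite inE => /andP [_ /g0].
Qed.

Section H2.
Variables (R : archiRealFieldType) (T : finType).

Lemma fm_ge0 (alpha x : R) : 0 < alpha -> 0 <= x -> 0 <= floor_mult alpha x.
Proof.
move=> a0 x0; rewrite /floor_mult; apply: mulr_ge0; last exact: ltW.
by rewrite ler0z floor_ge0 divr_ge0 // ltW.
Qed.


Lemma fm_le (alpha x y : R) : 0 < alpha -> x <= y -> floor_mult alpha x <= floor_mult alpha y.
Proof.
move=> a0 xy; rewrite /floor_mult; apply: ler_wpM2r; first exact: ltW.
rewrite ler_int; apply: le_floor.
by rewrite ler_wpM2r // invr_ge0 ltW.
Qed.

Lemma marg_ge0 (f : {set T} -> R) (X : {set T}) (e : T) : monotone_fun f -> 0 <= marg f X e.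
Proof. by move=> Hm; rewrite /marg subr_ge0 Hm // subsetUr. Qed.

Lemma marg_dimin (f : {set T} -> R) (X Z : {set T}) (e : T) : submodular_fun f ->
  X \subset Z -> e \notin Z -> marg f Z e <= marg f X e.
Proof.
move=> Hs XZ eZ; have := Hs (e |: X) Z.
have -> : (e |: X) :|: Z = e |: Z.
  by rewrite -setUA (setUidPr XZ).
have -> : (e |: X) :&: Z = X.
  apply/setP => y; rewrite !inE; case: (boolP (y == e)) => [/eqP -> | _] /=.
    by rewrite (negbTE eZ); apply/esym/negP => /(subsetP XZ) eZ'; rewrite eZ' in eZ.
  by apply: andb_idr; apply: (subsetP XZ).
rewrite /marg => H; lra.
Qed.

End H2.

Theorem mainTheorem3 (R : archiRealFieldType) (T : finType)
    (f : {set T} -> R) (I : pred {set T}) (k : nat) (alpha : R) (prec : rel T)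
    (S O : {set T}) (Y : T -> {set T}) (xe : T -> T) :
  nonneg_fun f -> monotone_fun f -> submodular_fun f ->
  (exists A, I A) -> downward_closed I -> k_exchange_system I k ->
  0 < alpha -> total_order prec ->
  I S -> I O ->
  locally_optimal I k f alpha prec S ->
  kexch_nbhd I k O S Y ->
  (forall e, e \in O :&: S -> Y e = [set e]) ->
  (forall e, e \in O -> Y e != set0 ->
     xe e \in Y e /\ forall z, z \in Y e -> wS f alpha prec S z <= wS f alpha prec S (xe e)) ->
  forall x, x \in S ->
    wS f alpha prec S x >=
    \sum_(e in Pset O Y xe x)
       (2 * wAB f alpha prec S (Pset O Y xe x) (Nset O Y xe x) e
        - \sum_(z in Y e) wS f alpha prec S z).
Proof.
move=> Hnn Hmono Hsub Hex Hdc Hkex Ha Htot HIS HIO Hlo [K1 K2 K3 K4] HOS Hxe x Hx.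
set P := Pset O Y xe x; set N := Nset O Y xe x.
set w := wS f alpha prec S; set c := wAB f alpha prec S P N.
set W := w x.
have w0 : forall z, 0 <= w z by move=> z; apply: fm_ge0 => //; apply: marg_ge0.
have HP : forall e, e \in P -> [/\ e \in O, x \in Y e, Y e \subset S &
     forall z, z \in Y e -> w z <= W].
  move=> e; rewrite inE => /and3P [eO Ye0 /eqP xex].
  have [xY Hm] := Hxe e eO Ye0; rewrite xex in xY Hm; split => //.
  case: (boolP (e \in S)) => eS.
    by rewrite HOS ?inE ?eO // sub1set.
  apply: (subset_trans (K1 e _)); first by rewrite inE eO eS.
  exact: subsetDl.
have HN : forall b, b \in N -> w b <= W.
  by move=> b /bigcupP [e eP bY]; have [_ _ _ ->] := HP e eP.
have L : \sum_(e in P) c e ^+ 2 <= \sum_(b in N) w b ^+ 2.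
  case: (boolP (x \in O)) => xO.
    have Pxo : forall e, e \in P -> e = x.
      move=> e eP; have:= eP; rewrite inE => /and3P [eO Ye0 /eqP xex].
      have [xY _] := Hxe e eO Ye0; rewrite xex in xY.
      case: (boolP (e \in S)) => eS.
        by move: xY; rewrite HOS ?inE ?eO // => /eqP.
      have eOS : e \in O :\: S by rewrite inE eO eS.
      by have := subsetP (K1 e eOS) x xY; rewrite !inE xO.
    case: (set_0Vmem P) => [P0 | [e eP]].
      by rewrite P0 big_set0; apply: sumr_ge0 => b _; apply: sqr_ge0.
    have ex := Pxo e eP; subst e.
    have YX : Y x = [set x] by rewrite HOS // inE xO Hx.
    have NS : N \subset [set x].
      by apply/subsetP => b /bigcupP [e eP' bY]; move: bY; rewrite (Pxo e eP') YX.
    have xN : x \in N by apply/bigcupP; exists x => //; rewrite YX set11.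
    have PS : P \subset [set x] by apply/subsetP => e /Pxo ->; rewrite set11.
    have := @sum_subset_le _ _ _ _ (fun e => c e ^+ 2) PS (fun z _ => sqr_ge0 _).
    move/le_trans; apply.
    have xN' : [set x] \subset N by rewrite sub1set.
    have := @sum_subset_le _ _ _ _ (fun e => w e ^+ 2) xN' (fun z _ => sqr_ge0 _).
    apply: le_trans; rewrite !big_set1.
    have c0 : 0 <= c x by apply: fm_ge0 => //; apply: marg_ge0.
    have cW : c x <= W.
      apply: fm_le => //; apply: marg_dimin => //.
        apply/subsetP => t; rewrite !inE => /andP [tS /andP [_ tx]].
        apply/orP; left; rewrite tS andbT; apply/negP => /(subsetP NS).
        by rewrite inE (negbTE tx).
      by rewrite !inE xN /= eqxx !andbF.
    by rewrite !expr2; apply: ler_pM.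
  have PS : P \subset O :\: S.
    apply/subsetP => e eP; have:= eP; rewrite inE => /and3P [eO Ye0 /eqP xex].
    rewrite inE eO andbT; apply/negP => eS.
    have [xY _] := Hxe e eO Ye0; rewrite xex HOS ?inE ?eO // in xY.
    by move: xY; rewrite ?inE => /eqP xe'; move: xO; rewrite xe' eO.
  apply: Hlo; split.
  - apply/subsetP => b /bigcupP [e eP bY]; have [_ _ YS _] := HP e eP.
    exact: (subsetP YS).
  - apply/subsetP => e eP; rewrite !inE negb_and negbK.
    by have := subsetP PS e eP; rewrite inE => /andP [-> _]; rewrite orbT.
  - apply: leq_trans (K3 x _); last by rewrite inE xO Hx.
    apply: subset_leq_card; apply/subsetP => e eP; rewrite inE (subsetP PS) //=.
    by have [_ ->] := HP e eP.
  - have NU : N \subset x |: \bigcup_(e in P) (Y e :\ x).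
      apply/subsetP => b /bigcupP [e eP bY]; rewrite !inE.
      case: (eqVneq b x) => //= bx; apply/bigcupP; exists e => //.
      by rewrite !inE bx.
    have h1 := subset_leq_card NU.
    have h2 := (leq_card_setU [set x] (\bigcup_(e in P) (Y e :\ x))).1.
    have h3 := @card_bigcup_le T T P (fun e => Y e :\ x).
    have h4 : (\sum_(e in P) #|Y e :\ x| <= \sum_(e in P) (k - 1))%N.
      apply: leq_sum => e eP; have [_ xY _ _] := HP e eP.
      have := K2 e (subsetP PS e eP); rewrite (cardsD1 x (Y e)) xY; lia.
    rewrite sum_nat_const in h4.
    have h5 : (#|P| <= k)%N.
      apply: leq_trans (K3 x _); last by rewrite inE xO Hx.
      apply: subset_leq_card; apply/subsetP => e eP; rewrite inE (subsetP PS) //=.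
      by have [_ ->] := HP e eP.
    rewrite cards1 in h2.
    nia.
  - exact: K4.
have U : \sum_(b in N) w b <= W + \sum_(e in P) \sum_(z in Y e :\ x) w z.
  have NU : N \subset x |: \bigcup_(e in P) (Y e :\ x).
    apply/subsetP => b /bigcupP [e eP bY]; rewrite !inE.
    case: (eqVneq b x) => //= bx; apply/bigcupP; exists e => //.
    by rewrite !inE bx.
  have := @sum_subset_le _ _ _ _ w NU (fun z _ => w0 z); move/le_trans; apply.
  rewrite big_setU1 /=; last first.
    by apply/bigcupP => -[e _]; rewrite !inE eqxx.
  rewrite lerD2l; exact: sum_bigcup_le.
have E : forall e, e \in P -> 2 * c e - \sum_(z in Y e) w z =
    2 * c e - (W + \sum_(z in Y e :\ x) w z).
  by move=> e eP; have [_ xY _ _] := HP e eP; rewrite (big_setD1 x xY).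
rewrite (eq_bigr _ E) sumrB big_split sumr_const -mulr_sumr.
set sc := \sum_(e in P) c e; set D := \sum_(e in P) _.
have D0 : 0 <= D by apply: sumr_ge0 => e _; apply: sumr_ge0.
have Nw2 : \sum_(b in N) w b ^+ 2 <= W * \sum_(b in N) w b.
  rewrite mulr_sumr; apply: ler_sum => b bN; rewrite expr2 ler_wpM2r //; exact: HN.
have W0 := w0 x; rewrite -/W in W0.
have [Wz|Wpos] := eqVneq W 0.
  have ce : forall e, e \in P -> c e <= 0.
    move=> e eP; have : c e ^+ 2 <= 0.
      have h1 : c e ^+ 2 <= \sum_(e0 in P) c e0 ^+ 2.
        have -> : c e ^+ 2 = \sum_(e0 in [set e]) c e0 ^+ 2 by rewrite big_set1.
        by apply: sum_subset_le; [rewrite sub1set | move=> z _; apply: sqr_ge0].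
      rewrite Wz mul0r in Nw2; exact: le_trans h1 (le_trans L Nw2).
    move=> H; have h0 := sqr_ge0 (c e).
    have : c e ^+ 2 == 0 by rewrite eq_le H h0.
    by rewrite sqrf_eq0 => /eqP ->.
  have : sc <= 0 by rewrite /sc; apply: sumr_le0.
  rewrite Wz mul0rn /= add0r => h; rewrite subr_le0; apply: le_trans D0.
  by apply: mulr_ge0_le0.
have Wp : 0 < W by rewrite lt0r Wpos W0.
have key : W * (2 * sc) <= W * (W + D + W *+ #|P|).
  have H1 : W * (2 * sc) <= \sum_(e in P) (c e ^+ 2 + W ^+ 2).
    rewrite /sc mulr_sumr mulr_sumr; apply: ler_sum => e _.
    rewrite -subr_ge0.
    have -> : c e ^+ 2 + W ^+ 2 - W * (2 * c e) = (c e - W) ^+ 2 by ring.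
    exact: sqr_ge0.
  rewrite big_split sumr_const in H1.
  have H2 : W * \sum_(b in N) w b <= W * (W + D) by rewrite ler_wpM2l.
  rewrite mulrDr mulrnAr -expr2; apply: le_trans H1 _; rewrite /= lerD2r.
  exact: le_trans L (le_trans Nw2 H2).
rewrite ler_pM2l // in key; rewrite /=; move: key; set m := W *+ #|P|; lra.
Qed.
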